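(* Let $A$ be a finite nonempty subset of $(0,\infty)$ and let $g:A\to[0,\infty)$. Let $f=g\circ g$ be the function defined on $A_2=\{a\in A: g(a)\in A\}$ by $f(a)=g(g(a))$, and let $h_{g\circ g}=\{(f(a)/a,\,a): a\in A_2\}$. Then $h_{g\circ g}=g$ (i.e. $\{(g(g(a))/a,a):a\in A_2\}=\{(a,g(a)):a\in A\}$) if and only if $A$ has exactly one element and $f=\{(1,1)\}$ (equivalently $A=\{1\}$ and $g(1)=1$).
   Context: For a function $f$ on a finite set $B\subset(0,\infty)$, the Hirsch function $h_f$ is defined exactly at the points $f(b)/b$, $b\in B$, and maps $f(b)/b$ to $b$. Equality of functions means same domain and same values. *)

(* Defs.v *)
From HB Require Import structures.
From mathcomp Require Import all_boot all_order all_algebra.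
From mathcomp Require Import all_classical all_reals.
Set Implicit Arguments. Unset Strict Implicit. Unset Printing Implicit Defensive.
Import Order.TTheory GRing.Theory Num.Theory.
Local Open Scope classical_set_scope.
Local Open Scope ring_scope.

Definition graph_on {R : realType} (D : set R) (F : R -> R) : set (R * R) :=
  [set p | exists a, D a /\ p = (a, F a)].

Definition dom2 {R : realType} (A : set R) (g : R -> R) : set R :=
  [set a | A a /\ A (g a)].

Definition hirsch {R : realType} (D : set R) (F : R -> R) : set (R * R) :=
  [set p | exists b, D b /\ p = (F b / b, b)].

(* Main.v *)
Require Import Defs.
From HB Require Import structures.
From mathcomp Require Import all_boot all_order all_algebra.
From mathcomp Require Import all_classical all_reals.
From mathcomp Require Import ring lra exp.
Import Order.TTheory GRing.Theory Num.Theory.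
Local Open Scope classical_set_scope.
Local Open Scope ring_scope.

Lemma core {R : realType} {s : seq R} {sg x : R -> R}
  (hinv : forall F : R -> R, \sum_(a <- s) F (sg a) = \sum_(a <- s) F a)
  (hrel : forall a, a \in s -> x (sg (sg (sg a))) = x a + x (sg a)) :
  forall a, a \in s -> x a = 0.
Proof.
set H := fun b => x (sg b) * x b.
have hC2 : \sum_(a <- s) x a * x (sg (sg a)) = 0.
  have e1 : \sum_(a <- s) H (sg (sg a)) = \sum_(a <- s) (x a * x (sg (sg a)) + H (sg a)).
    apply: eq_big_seq => a ha; rewrite /H hrel //; ring.
  move: e1; rewrite big_split /= (hinv (fun b => H (sg b))) hinv.
  move=> e; lra.
have hS : \sum_(a <- s) x a ^+ 2 = 0.
  have e2 : \sum_(a <- s) x a ^+ 2 = \sum_(a <- s) (x (sg (sg (sg a))) ^+ 2 + x (sg a) ^+ 2 - 2 * (x (sg (sg (sg a))) * x (sg a))).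
    apply: eq_big_seq => a ha; rewrite hrel //; ring.
  move: e2; rewrite big_split /= big_split /= sumrN -mulr_sumr.
  rewrite (hinv (fun b => x (sg (sg b)) ^+ 2)) (hinv (fun b => x (sg b) ^+ 2)).
  idtac.
  have -> : \sum_(a <- s) x (sg (sg (sg a))) * x (sg a) = 0.
    rewrite (hinv (fun b => x (sg (sg b)) * x b)); rewrite -[X in _ = X]hC2.
    by apply: eq_bigr => a _; rewrite mulrC.
  move=> h; rewrite !(hinv (fun b => x b ^+ 2)) in h; lra.
move=> a ha.
have: forall b, b \in s -> x b ^+ 2 = 0.
  move=> b hb; apply/eqP; move/eqP: hS; rewrite psumr_eq0 => [/allP/(_ b hb)/implyP -> //|i _].
  exact: sqr_ge0.
by move=> /(_ a ha) /eqP; rewrite sqrf_eq0 => /eqP.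
Qed.

Theorem theorem11 (R : realType) (A : set R) (g : R -> R) :
  finite_set A -> A !=set0 ->
  (forall a, A a -> 0 < a) ->
  (forall a, A a -> 0 <= g a) ->
  (hirsch (dom2 A g) (fun a => g (g a)) = graph_on A g <->
   ((exists x, A = [set x]) /\
    graph_on (dom2 A g) (fun a => g (g a)) = [set (1, 1)])).
Proof.
move=> fA [a0 Aa0] Apos gnn; split.
- move=> E.
  have Hmap : forall a, A a -> A (g a) /\ a * g a = g (g (g a)).
    move=> a Aa.
    have : graph_on A g (a, g a) by exists a.
    rewrite -E => -[b [[Ab Agb] [e1 e2]]].
    rewrite e2; split => //; rewrite e1 mulrVK //.
    by rewrite unitfE gt_eqF // Apos.
  have Hsurj : forall b, A b -> exists a, A a /\ b = g a.
    move=> b Ab.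
    have : hirsch (dom2 A g) (fun a => g (g a)) (g (g b) / b, b).
      by exists b; split => //; split => //; case: (Hmap b Ab).
    by rewrite E => -[a [Aa [_ e]]]; exists a.
  have [s Es] := (finite_seqP A).1 fA.
  set s' := undup s.
  have mem : forall a, (a \in s') = `[< A a >].
    move=> a; rewrite mem_undup Es; apply/idP/idP => [h|/asboolP //].
    by apply/asboolP.
  have us' : uniq s' by apply: undup_uniq.
  have sub : {subset s' <= map g s'}.
    move=> b; rewrite mem => /asboolP /Hsurj [a [Aa ->]].
    by apply: map_f; rewrite mem; apply/asboolP.
  have [_ eqm] := uniq_min_size us' sub (eq_leq (size_map g s')).
  have um : uniq (map g s') by rewrite (uniq_size_uniq us' eqm) size_map.
  have pe : perm_eq (map g s') s' by apply: uniq_perm => // z; rewrite eqm.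
  have hinv : forall F : R -> R, \sum_(a <- s') F (g a) = \sum_(a <- s') F a.
    by move=> F; rewrite -[RHS](perm_big _ pe) big_map.
  have hrel : forall a, a \in s' -> ln (g (g (g a))) = ln a + ln (g a).
    move=> a; rewrite mem => /asboolP Aa.
    have [Aga e] := Hmap a Aa.
    rewrite -e lnM // posrE; exact: Apos.
  have all1 : forall a, A a -> a = 1.
    move=> a Aa; apply/eqP; rewrite -ln_eq0; last exact: Apos.
    by apply/eqP; apply: (core hinv hrel a); rewrite mem; apply/asboolP.
  have EA : A = [set 1].
    apply/seteqP; split => z /=; first exact: all1.
    by move=> ->; rewrite -(all1 a0 Aa0).
  have g1 : g 1 = 1.
    have A1 : A 1 by rewrite EA.
    exact: all1 (Hmap 1 A1).1.
  split; first by exists 1.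
  apply/seteqP; split => p /=.
    by move=> [a [[Aa _] ->]]; rewrite (all1 a Aa) !g1.
  move=> ->; exists 1; rewrite /dom2 EA g1 /=; split => //.
  by rewrite g1.
- move=> [[x0 HA] HG].
  have : [set ((1 : R), (1 : R))] (1, 1) by [].
  rewrite -HG => -[a [[Aa Aga] e]].
  move: Aa Aga; rewrite HA /= => ax gax.
  case: e => a1 ga1; subst a; subst x0.
  have g1 : g 1 = 1 by [].
  apply/seteqP; split => p /=.
    move=> [b [[Ab _] ->]]; move: Ab => /= ->.
    by exists 1; rewrite /= !g1 divr1.
  move=> [b [Ab ->]]; move: Ab => /= ->.
  exists 1; rewrite /dom2 /= !g1 divr1; split => //.
Qed.
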